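(* Let $X$ be a Polish space and $T$ a continuous self-map of $X$ admitting an invariant Borel probability measure $m$. Let $\mathbf G$ be a compact abelian group acting continuously on $X$, and assume that $T(gx)=\beta(g)T(x)$ for all $g\in\mathbf G$ and $x\in X$, where $\beta:\mathbf G\to\mathbf G$ is a continuous map preserving the Haar measure of $\mathbf G$. Define $\widetilde m(A)=\int_{\mathbf G}m(g^{-1}A)\,dg$ for Borel $A\subseteq X$, where $dg$ is the normalized Haar measure. Then $\widetilde m$ is $\mathbf G$-invariant, and for every $g\in\mathbf G$ it is invariant under both maps $x\mapsto gT(x)$ and $x\mapsto T(gx)$.
   Context: A measure $m$ is invariant under a Borel map $S$ if $m(S^{-1}A)=m(A)$ for all Borel $A$; $\mathbf G$-invariance means $\widetilde m(gA)=\widetilde m(A)$ for all $g$ and Borel $A$. *)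

(* Defs.v *)
From HB Require Import structures.
From mathcomp Require Import all_boot all_order all_algebra.
From mathcomp Require Import all_classical all_reals all_analysis.
Set Implicit Arguments. Unset Strict Implicit. Unset Printing Implicit Defensive.
Import Order.TTheory GRing.Theory Num.Theory.
Local Open Scope classical_set_scope.
Local Open Scope ring_scope.

Notation borel T := (@g_sigma_algebraType T (@open T)).

(* A topological abelian group is pointed by 0; this alias lets us form its
   Borel sigma-algebra (the library's generated sigma-algebra needs a pointed
   carrier). *)
Definition pgrp (G : topologicalZmodType) : Type := G.
HB.instance Definition _ (G : topologicalZmodType) := Choice.on (pgrp G).
HB.instance Definition _ (G : topologicalZmodType) :=
  isPointed.Build (pgrp G) (0 : G).
Notation borelG G := (@g_sigma_algebraType (pgrp G) (@open G)).

Definition separable_space (T : topologicalType) : Prop :=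
  exists D : set T, countable D /\ closure D = setT.

(* A Polish space is represented as a complete metric space (Hausdorff, so the
   pseudometric is a metric) which is separable. *)
Definition polish (R : realType) (X : completePseudoMetricType R) : Prop :=
  hausdorff_space X /\ separable_space X.

Definition haar_prob (R : realType) (G : topologicalZmodType)
    (mu : probability (borelG G) R) : Prop :=
  [/\ (forall (g : G) (A : set (borelG G)), measurable A ->
          mu [set g + (a : G) | a in A] = mu A),
      (forall A : set (borelG G), measurable A ->
          mu A = ereal_inf [set mu U | U in [set U : set G | open U /\ A `<=` U]]) &
      (forall U : set G, open U ->
          mu U = ereal_sup [set mu K | K in [set K : set G | compact K /\ K `<=` U]])].

(* The averaged measure  m~(A) = \int_G m(g^{-1} A) dg ;
   note g^{-1}A = { x | g x \in A } = act g @^-1` A. *)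
Definition mtilde (R : realType) (G : topologicalZmodType) (X : ptopologicalType)
    (act : G -> X -> X) (mu : probability (borelG G) R)
    (m : probability (borel X) R) (A : set X) : \bar R :=
  (\int[mu]_(g in [set: borelG G]) m (act g @^-1` A))%E.

(* Main.v *)
Require Import Defs.
From HB Require Import structures.
From mathcomp Require Import all_boot all_order all_algebra.
From mathcomp Require Import all_classical all_reals all_analysis.
From mathcomp Require Import measurable_realfun.
Import Order.TTheory GRing.Theory Num.Theory.
Local Open Scope classical_set_scope.
Local Open Scope ring_scope.

Lemma countable_bigcup_meas d (T : sigmaRingType d) I (P : set I) (F : I -> set T) :
  countable P -> (forall i, P i -> measurable (F i)) ->
  measurable (\bigcup_(i in P) F i).
Proof.
move=> cP mF; rewrite bigcup_set_type.
apply: countable_bigcupT_measurable.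
  by rewrite (eq_countable (card_setT _)).
move=> i; apply: mF; exact: set_valP.
Qed.

Lemma open_borel (X : ptopologicalType) (U : set X) : open U -> measurable (U : set (borel X)).
Proof. by move=> oU; apply: sub_gen_smallest. Qed.

Lemma open_borelG (G : topologicalZmodType) (U : set G) : open U -> measurable (U : set (borelG G)).
Proof. by move=> oU; apply: sub_gen_smallest. Qed.

Lemma exists_small_inv (R : realType) (e : R) : 0 < e -> exists n : nat, n.+1%:R^-1 < e.
Proof.
move=> e0; have [N _ HN] := near_infty_natSinv_lt (PosNum e0).
by exists N; apply: HN => /=.
Qed.

Lemma act_meas (R : realType) (X : completePseudoMetricType R) (hX : polish X)
  (G : topologicalZmodType) (act : G -> X -> X)
  (hact_cont : continuous (fun p : G * X => act p.1 p.2)) :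
  measurable_fun setT (fun p : (borelG G * borel X)%type => (act p.1 p.2 : borel X)).
Proof.
have [_ [D [cD dD]]] := hX.
apply: (@measurability _ _ _ (borel X) _ _ (@open X)) => //.
move=> _ [U oU <-]; rewrite setTI.
set W := (fun p : G * X => act p.1 p.2) @^-1` U.
have oW : open W by apply: (proj1 (continuousP _) hact_cont).
pose r (n : nat) : R := n.+1%:R^-1.
pose V (i : X * nat) : set G := \bigcup_(O in [set O : set G | open O /\ O `*` (ball i.1 (r i.2))° `<=` W]) O.
have -> : (W : set (borelG G * borel X)) = \bigcup_(i in D `*` [set: nat]) (V i `*` (ball i.1 (r i.2))°).
  apply/seteqP; split; last first.
    move=> [g x] [i _] [] [Q [oQ sQ] Qg] xi; exact: (sQ (g, x)).
  move=> [g x] Wgx.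
  have := oW (g, x) Wgx.
  move=> H; move: H => [[A B] /= [nA nB] AB].
  have /nbhs_ballP[e /= e0 eB] := nB.
  have e2 : 0 < e / 2 by rewrite divr_gt0.
  have [n hn] := exists_small_inv _ _ e2.
  have r0 : 0 < r n by rewrite /r invr_gt0.
  have hr2 : 0 < r n / 2 by rewrite divr_gt0.
  have : closure D x by rewrite dD.
  move=> /(_ _ (nbhsx_ballx x _ hr2)) [dd [Ddd xdd]].
  exists (dd, n); first by split.
  split.
    exists A°; last by [].
    split; first exact: open_interior.
    move=> [g' y] [/= Ag' yb]; apply: AB; split => /=.
      exact: interior_subset.
    apply: eB; rewrite /ball_ /=.
    have ydd := interior_subset yb.
    have := ball_triangle xdd ydd.
    apply: le_ball.
    have : r n / 2 + r n <= r n + r n by rewrite lerD2r ler_pdivrMr // ler_pMr // ler1n.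
    move=> h; apply: (le_trans h); rewrite -mulr2n -mulr_natr -ler_pdivlMr //; exact: ltW.
  apply/nbhs_ballP; exists (r n / 2) => //= y xy.
  have := ball_triangle (ball_sym xdd) xy.
  move=> h; apply: (le_ball _ h).
  by rewrite -splitr.
apply: countable_bigcup_meas; first by apply: countableX.
move=> i _; apply: measurableX.
  apply: open_borelG; apply: bigcup_open => O [].
  done.
by apply: open_borel; exact: open_interior.
Qed.

Lemma cont_measG (G : topologicalZmodType) (f : G -> G) : continuous f ->
  measurable_fun setT (f : borelG G -> borelG G).
Proof.
move=> cf; apply: (@measurability _ _ _ (borelG G) _ _ (@open G)) => //.
move=> _ [U oU <-]; rewrite setTI; apply: open_borelG.
exact: (proj1 (continuousP _) cf).
Qed.

Lemma transl_cont (G : topologicalZmodType) (g : G) : continuous (fun h : G => g + h).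
Proof.
move=> h.
apply: (@continuous_comp _ _ _ (fun h : G => (g, h)) (fun z : G * G => z.1 + z.2)).
  by apply: cvg_pair; [exact: cvg_cst | exact: cvg_id].
exact: add_continuous.
Qed.

Lemma integral_mp (R : realType) (G : topologicalZmodType)
  (mu : probability (borelG G) R) (phi : G -> G)
  (mphi : measurable_fun setT (phi : borelG G -> borelG G))
  (hp : forall B : set (borelG G), measurable B -> mu (phi @^-1` B) = mu B)
  (F : borelG G -> \bar R) (mF : measurable_fun [set: borelG G] F) (F0 : forall x, (0 <= F x)%E) :
  (\int[mu]_(x in [set: borelG G]) F (phi x) = \int[mu]_(x in [set: borelG G]) F x)%E.
Proof.
rewrite -[RHS](@eq_measure_integral _ _ _ _ _ (pushforward mu (phi : borelG G -> borelG G))).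
  rewrite (ge0_integral_pushforward mphi) //.
  all: try by move=> y _; exact: F0.
  all: try done.

by move=> B mB _; exact: (hp B mB).
Qed.

Theorem proposition6p1 (R : realType)
  (X : completePseudoMetricType R) (hX : polish X)
  (T : X -> X) (hTc : continuous T)
  (m : probability (borel X) R)
  (hm : forall A : set (borel X), measurable A -> m (T @^-1` A) = m A)
  (G : topologicalZmodType) (hGc : compact [set: G]) (hGh : hausdorff_space G)
  (act : G -> X -> X)
  (hact_cont : continuous (fun p : G * X => act p.1 p.2))
  (hact0 : forall x, act 0 x = x)
  (hactD : forall g h x, act (g + h) x = act g (act h x))
  (mu : probability (borelG G) R) (hmu : haar_prob mu)
  (beta : G -> G) (hbc : continuous beta)
  (hbeta : forall B : set (borelG G), measurable B -> mu (beta @^-1` B) = mu B)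
  (hTeq : forall g x, T (act g x) = act (beta g) (T x)) :
  (forall (g : G) (A : set (borel X)), measurable A ->
     mtilde act mu m [set act g a | a in A] = mtilde act mu m A) /\
  (forall (g : G) (A : set (borel X)), measurable A ->
     mtilde act mu m ((fun x => act g (T x)) @^-1` A) = mtilde act mu m A) /\
  (forall (g : G) (A : set (borel X)), measurable A ->
     mtilde act mu m ((fun x => T (act g x)) @^-1` A) = mtilde act mu m A).
Proof.
pose f := fun p : (borelG G * borel X)%type => (act p.1 p.2 : borel X).
have mf : measurable_fun setT f := act_meas _ _ hX _ _ hact_cont.
have mE : forall A : set (borel X), measurable A -> measurable (f @^-1` A).
  by move=> A mA; rewrite -[X in measurable X]setTI; exact: mf.
have secE : forall (A : set (borel X)) (h : G), xsection (f @^-1` A) h = act h @^-1` A.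
  by move=> A h; rewrite xsectionE.
have mact : forall (A : set (borel X)) (h : G), measurable A ->
    measurable (act h @^-1` A : set (borel X)).
  by move=> A h mA; have := measurable_xsection (h : borelG G) (mE A mA); rewrite secE.
pose F (A : set (borel X)) := fun h : borelG G => m (act h @^-1` A).
have mF : forall A, measurable A -> measurable_fun [set: borelG G] (F A).
  move=> A mA; have := measurable_fun_xsection m (mE A mA).
  rewrite (_ : F A = m \o xsection (f @^-1` A)) //.
  by apply/funext => h; rewrite /= secE.
have F0 : forall A h, (0 <= F A h)%E by move=> A h; exact: measure_ge0.
have mtr : forall g : G, measurable_fun setT ((fun h : G => g + h) : borelG G -> borelG G).
  by move=> g; apply: cont_measG; exact: transl_cont.
have [hinv _ _] := hmu.
have htr : forall (g : G) (B : set (borelG G)), measurable B ->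
    mu ((fun h : G => g + h) @^-1` B) = mu B.
  move=> g B mB; rewrite -(hinv (- g) B mB); congr (mu _).
  apply/seteqP; split => x /=.
    by move=> Bx; exists (g + x) => //; rewrite addKr.
  by move=> [a Ba <-]; rewrite addrA subrr add0r.
have mbeta : measurable_fun setT (beta : borelG G -> borelG G) by exact: cont_measG.
split; [|split].
- move=> g A mA; rewrite /mtilde.
  transitivity (\int[mu]_(h in [set: borelG G]) F A (- g + h)%R)%E.
    apply: eq_integral => h _; rewrite /F; congr (m _).
    apply/seteqP; split => x /=.
      by move=> [a Aa e]; rewrite hactD -e -hactD addNr hact0.
    by move=> H; exists (act (- g + h) x) => //; rewrite -hactD addrA subrr add0r.
  have H := @integral_mp _ _ mu _ (mtr (- g)) (htr (- g)) _ (mF A mA) (F0 A).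

  exact H.
- move=> g A mA; rewrite /mtilde.
  transitivity (\int[mu]_(h in [set: borelG G]) F A (g + beta h)%R)%E.
    apply: eq_integral => h _; rewrite /F.
    have -> : act h @^-1` ((fun x => act g (T x)) @^-1` A) =
              T @^-1` (act (g + beta h) @^-1` A).
      by apply/funext => x /=; rewrite hTeq hactD.
    exact: hm _ (mact _ _ mA).
  rewrite (@integral_mp _ _ mu beta mbeta hbeta (fun k => F A (g + k))).
  + exact: (@integral_mp _ _ mu _ (mtr g) (htr g) _ (mF A mA) (F0 A)).
  + exact: measurableT_comp (mF A mA) (mtr g).
  + by move=> k; exact: F0.
- move=> g A mA; rewrite /mtilde.
  transitivity (\int[mu]_(h in [set: borelG G]) F A (beta (g + h)%R))%E.
    apply: eq_integral => h _; rewrite /F.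
    have -> : act h @^-1` ((fun x => T (act g x)) @^-1` A) =
              T @^-1` (act (beta (g + h)) @^-1` A).
      by apply/funext => x /=; rewrite -hactD hTeq.
    exact: hm _ (mact _ _ mA).
  rewrite (@integral_mp _ _ mu (fun h : G => g + h) (mtr g) (htr g) (fun k => F A (beta k))).
  + exact: (@integral_mp _ _ mu _ mbeta hbeta _ (mF A mA) (F0 A)).
  + exact: measurableT_comp (mF A mA) mbeta.
  + by move=> k; exact: F0.
Qed.
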